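(* Let $l$ be a positive integer, let $G$ be an arbitrary graph and let $H$ be an $l$-degenerate graph. If $l\in\{1,2\}$, then $G+_S H$ is $2$-degenerate; if $l\ge 3$, then $G+_S H$ is $l$-degenerate.
   Context: A graph is $k$-degenerate if its vertices can be successively deleted so that each deleted vertex has degree at most $k$ (in the remaining graph) at the time of deletion. The subdivision graph $S(G)$ is obtained from $G$ by inserting one new vertex into each edge (each edge replaced by a path of length 2); its vertex set is identified with $V(G)\cup E(G)$. The $S$-sum $G+_S H$ has vertex set $(V(G)\cup E(G))\times V(H)$, and $(u_1,u_2)$, $(v_1,v_2)$ are adjacent iff either [$u_1=v_1\in V(G)$ and $u_2v_2\in E(H)$] or [$u_2=v_2$ and $u_1v_1\in E(S(G))$]. *)

(* Defs.v *)
From mathcomp Require Import all_boot.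
Set Implicit Arguments. Unset Strict Implicit. Unset Printing Implicit Defensive.

Definition simple_graph (T : finType) (e : rel T) : Prop :=
  symmetric e /\ irreflexive e.

(* k-degenerate: there is an ordering s of all vertices (deletion order) such that
   each vertex x, at the time it is deleted, has at most k neighbours among the
   vertices not yet deleted (those after x in s). *)
Definition degenerate (T : finType) (e : rel T) (k : nat) : Prop :=
  exists s : seq T, perm_eq s (enum T) /\
    forall (s1 : seq T) (x : T) (s2 : seq T), s = s1 ++ x :: s2 -> count (e x) s2 <= k.

Definition is_edge (T : finType) (e : rel T) (A : {set T}) : bool :=
  [exists x, exists y, e x y && (A == [set x; y])].

Definition is_SV (T : finType) (e : rel T) (v : T + {set T}) : bool :=
  match v with inl _ => true | inr A => is_edge e A end.

(* Vertex set of the subdivision graph S(G): V(G) ∪ E(G). *)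
Definition SV (T : finType) (e : rel T) : finType := {v : T + {set T} | is_SV e v}.

Definition Sadj0 (T : finType) (v w : T + {set T}) : bool :=
  match v, w with
  | inl x, inr A => x \in A
  | inr A, inl x => x \in A
  | _, _ => false
  end.

Definition Sadj (T : finType) (e : rel T) : rel (SV e) :=
  fun v w => Sadj0 (val v) (val w).

Definition is_vertex (T : finType) (e : rel T) (v : SV e) : bool :=
  if val v is inl _ then true else false.

Definition Ssum_adj (T U : finType) (eG : rel T) (eH : rel U) : rel (SV eG * U) :=
  fun p q =>
    ((p.1 == q.1) && is_vertex p.1 && eH p.2 q.2)
    || ((p.2 == q.2) && Sadj p.1 q.1).
Arguments Ssum_adj {T U} eG eH _ _.
Arguments Sadj {T} e _ _.

(* Main.v *)
Require Import Defs.
From mathcomp Require Import all_boot.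
Set Implicit Arguments. Unset Strict Implicit. Unset Printing Implicit Defensive.

Definition good (V : Type) (e : V -> V -> bool) (k : nat) (s : seq V) : Prop :=
  forall (s1 : seq V) (x : V) (s2 : seq V), s = s1 ++ x :: s2 -> count (e x) s2 <= k.

Lemma good_nil V (e : V -> V -> bool) k : good e k [::].
Proof. by move=> [|? ?] x s2. Qed.

Lemma good_cons V (e : V -> V -> bool) k y t :
  good e k (y :: t) <-> count (e y) t <= k /\ good e k t.
Proof.
split.
- move=> H; split; first exact: (H [::]).
  by move=> s1 x s2 E; apply: (H (y :: s1)); rewrite E.
- move=> [Hc Ht] [|z s1] x s2 /= [E1 E2]; first by rewrite -E1 -E2.
  exact: (Ht s1).
Qed.

Section S.
Variables (T U : finType) (eG : rel T) (eH : rel U).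

Lemma vertex_Sadj (v w : SV eG) : is_vertex v -> Sadj eG v w -> ~~ is_vertex w.
Proof.
by case: v w => [[x|A] Hv] [[y|B] Hw].
Qed.

Lemma edge_bound (p : SV eG * U) (t : seq (SV eG * U)) :
  ~~ is_vertex p.1 -> uniq t -> count (Ssum_adj eG eH p) t <= 2.
Proof.
case: p => [[[z|A] Hv] u] //= _ Ut.
have /existsP [x /existsP [y /andP [_ /eqP EA]]] : is_edge eG A := Hv.
pose qa : SV eG * U := (exist _ (inl x) isT, u).
pose qb : SV eG * U := (exist _ (inl y) isT, u).
rewrite -size_filter.
apply: (leq_trans (uniq_leq_size (s2 := [:: qa; qb]) (filter_uniq _ Ut) _)) => //.
move=> [[[w|B] Hw] u'] /=; rewrite mem_filter /Ssum_adj /= => /andP [H _];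
  move: H; rewrite /Sadj /= ?andbF ?andbF //=.
move=> /andP [/eqP <- ]; rewrite EA => /set2P [->|->]; rewrite !inE.
- have -> : Hw = isT by exact: eq_irrelevance. by rewrite eqxx.
- have -> : Hw = isT by exact: eq_irrelevance. by rewrite eqxx orbT.
Qed.

Variable k : nat.
Hypothesis k2 : 2 <= k.

Lemma good_edges (a b : seq (SV eG * U)) :
  all (fun p => ~~ is_vertex p.1) a -> uniq (a ++ b) ->
  good (Ssum_adj eG eH) k b -> good (Ssum_adj eG eH) k (a ++ b).
Proof.
elim: a => [|y a IH] //= /andP [Hy Ha] /andP [_ Hu] Hb.
apply/good_cons; split; last exact: IH.
have := edge_bound Hy Hu; by move=> /leq_trans; apply.
Qed.

End S.

Lemma block (T U : finType) (eG : rel T) (eH : rel U) k (v : SV eG) (sV : seq (SV eG))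
  (sH : seq U) (rest : seq (SV eG * U)) :
  good eH k sH -> is_vertex v ->
  (forall q, q \in rest -> is_vertex q.1 && (q.1 != v)) ->
  good (Ssum_adj eG eH) k rest ->
  good (Ssum_adj eG eH) k ([seq (v, u) | u <- sH] ++ rest).
Proof.
move=> + Hv Hr Hg; elim: sH => [|u sH IH] //= /good_cons [Hc Hs].
apply/good_cons; split; last exact: IH.
rewrite count_cat.
have -> : count (Ssum_adj eG eH (v, u)) rest = 0.
  apply/eqP; rewrite eqn0Ngt -has_count; apply/hasPn => [[w u']] /Hr /= /andP [Hw Hne].
  rewrite /Ssum_adj /= eq_sym (negbTE Hne) /=.
  apply/negP => /andP [_ /(vertex_Sadj Hv)]; by rewrite Hw.
rewrite addn0 count_map.
rewrite (eq_count (a2 := eH u)) //.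
move=> u' /=; rewrite /Ssum_adj /= eqxx Hv /=.
case E: (Sadj eG v v); last by rewrite andbF orbF.
by move: (vertex_Sadj Hv E); rewrite Hv.
Qed.

Lemma good_vertices (T U : finType) (eG : rel T) (eH : rel U) k (sH : seq U)
  (sV : seq (SV eG)) :
  good eH k sH -> uniq sV -> all (@is_vertex T eG) sV ->
  good (Ssum_adj eG eH) k [seq (w, u) | w <- sV, u <- sH].
Proof.
move=> HH; elim: sV => [|v sV IH] /=; first by move=> *; apply: good_nil.
move=> /andP [nv Us] /andP [Hv Ha].
apply: block => //; last exact: IH.
move=> [w u] /allpairsP [[w' u'] /= [Hw' _ [-> _]]]; rewrite (allP Ha) //=.
by apply/eqP => E; move: nv; rewrite -E Hw'.
Qed.

Lemma main (T U : finType) (eG : rel T) (eH : rel U) (l : nat) :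
  degenerate eH l -> degenerate (Ssum_adj eG eH) (maxn 2 l).
Proof.
move=> [sH [PH GH]].
have GH' : good eH (maxn 2 l) sH.
  move=> s1 x s2 E; exact: leq_trans (GH _ _ _ E) (leq_maxr _ _).
pose a := [seq p <- enum (predT : pred (SV eG * U)) | ~~ is_vertex p.1].
pose sV := [seq v <- enum (SV eG) | is_vertex v].
pose b := [seq (w, u) | w <- sV, u <- sH].
have Ub : uniq b.
  apply: allpairs_uniq; first by rewrite filter_uniq // enum_uniq.
    by rewrite (perm_uniq PH) enum_uniq.
  by move=> [? ?] [? ?] _ _.
have Hbv : forall q, q \in b -> is_vertex q.1.
  by move=> q /allpairsP [[w u] /= [Hw _ ->]]; move: Hw; rewrite mem_filter => /andP [].
have U_ab : uniq (a ++ b).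
  rewrite cat_uniq filter_uniq ?enum_uniq // Ub andbT.
  apply/hasPn => q /Hbv Hq; by rewrite mem_filter Hq.
exists (a ++ b); split.
  apply: uniq_perm => //; first exact: enum_uniq.
  move=> q; rewrite mem_enum mem_cat; case Hq: (is_vertex q.1).
    apply/orP; right; apply/allpairsP; exists (q.1, q.2); split => //=.
    - by rewrite mem_filter Hq mem_enum.
    - by rewrite (perm_mem PH) mem_enum.
    - by case: q Hq.
  by rewrite mem_filter Hq mem_enum.
apply: good_edges => //; first exact: leq_maxl.
  by apply/allP => q; rewrite mem_filter => /andP [].
apply: good_vertices => //; first by rewrite filter_uniq // enum_uniq.
by apply/allP => v; rewrite mem_filter => /andP [].
Qed.

Theorem theorem1 (T U : finType) (eG : rel T) (eH : rel U) (l : nat) :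
  0 < l -> simple_graph eG -> simple_graph eH -> degenerate eH l ->
  ((l <= 2 -> degenerate (Ssum_adj eG eH) 2) /\
   (3 <= l -> degenerate (Ssum_adj eG eH) l)).
Proof.
move=> _ _ _ /(main eG) D; split => H.
- by move: D; rewrite (maxn_idPl H).
- by move: D; rewrite (maxn_idPr (ltnW H)).
Qed.
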